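(* Let $e_1,\dots,e_k\in\mathbb{C}^{n\times n}$ be an irreducible anticommuting family. Then every $e_i$ is either invertible or nilpotent. Moreover: (1) for every $i\in[k]$ there is $\lambda_i\in\mathbb{C}$ with $\mathrm{spec}(e_i)\subseteq\{\lambda_i,-\lambda_i\}$; (2) if at least two of the matrices $e_1,\dots,e_k$ are invertible, then $n$ is even and for every invertible $e_i$ the algebraic multiplicity of $\lambda_i$ as an eigenvalue of $e_i$ is exactly $n/2$.
   Context: A family $e_1,\dots,e_k$ of complex $n\times n$ matrices is called anticommuting if $e_ie_j=-e_je_i$ for all distinct $i,j\in[k]=\{1,\dots,k\}$. For $X_1\in\mathbb{C}^{r_1\times r_1}$, $X_2\in\mathbb{C}^{r_2\times r_2}$, $X_1\oplus X_2$ denotes the block-diagonal matrix $\begin{pmatrix}X_1&0\\0&X_2\end{pmatrix}$. A family $e_1,\dots,e_k\in\mathbb{C}^{n\times n}$ is reducible if there exist an invertible $V\in\mathbb{C}^{n\times n}$ and integers $0<r_1<n$, $r_2=n-r_1$, and matrices $e_i(1)\in\mathbb{C}^{r_1\times r_1}$, $e_i(2)\in\mathbb{C}^{r_2\times r_2}$ such that $Ve_iV^{-1}=e_i(1)\oplus e_i(2)$ for all $i\in[k]$; otherwise it is irreducible. $\mathrm{spec}(X)$ is the set of eigenvalues of $X$. *)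

(* Defs.v *)
From HB Require Import structures.
From mathcomp Require Import all_boot all_order all_algebra all_field.
Set Implicit Arguments. Unset Strict Implicit. Unset Printing Implicit Defensive.
Import GRing.Theory Num.Theory.
Local Open Scope ring_scope.

(* Complex numbers are modelled by algC (algebraic closure of Q with a
   conjugation); all statements below are purely algebraic. *)

Definition anticommuting (n k : nat) (e : 'I_k -> 'M[algC]_n) : Prop :=
  forall i j : 'I_k, i != j -> e i *m e j = - (e j *m e i).

Definition reducible (n k : nat) (e : 'I_k -> 'M[algC]_n) : Prop :=
  exists (r1 r2 : nat) (Hr : (r1 + r2)%N = n),
    (0 < r1)%N /\ (r1 < n)%N /\
    exists V : 'M[algC]_n, V \in unitmx /\
      forall i : 'I_k, exists (A : 'M[algC]_r1) (B : 'M[algC]_r2),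
        V *m e i *m invmx V = castmx (Hr, Hr) (block_mx A 0 0 B).

Definition irreducible_family (n k : nat) (e : 'I_k -> 'M[algC]_n) : Prop :=
  ~ reducible e.

Definition nilpotent_mx (n : nat) (A : 'M[algC]_n) : Prop :=
  exists m : nat, A ^+ m = 0.

(* Main.v *)
Require Import Defs.
From HB Require Import structures.
From mathcomp Require Import all_boot all_order all_algebra all_field.
Import GRing.Theory Num.Theory.
Local Open Scope ring_scope.
Lemma red_helper k N r1 r2 (Hr : (r1 + r2)%N = N) (e : 'I_k -> 'M[algC]_N)
  (V1 : 'M[algC]_(r1,N)) (V2 : 'M[algC]_(r2,N)) :
  row_full (col_mx V1 V2) -> (forall i, (V1 *m e i <= V1)%MS) ->
  (forall i, (V2 *m e i <= V2)%MS) ->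
  exists V : 'M[algC]_N, V \in unitmx /\
      forall i : 'I_k, exists (A : 'M[algC]_r1) (B : 'M[algC]_r2),
        V *m e i *m invmx V = castmx (Hr, Hr) (block_mx A 0 0 B).
Proof.
case: N / Hr e V1 V2 => e V1 V2 Vf S1 S2.
exists (col_mx V1 V2); rewrite -row_full_unit; split => // i.
have [A HA] := submxP (S1 i); have [B HB] := submxP (S2 i).
exists A, B; rewrite castmx_id mul_col_mx HA HB.
have -> : col_mx (A *m V1) (B *m V2) = block_mx A 0 0 B *m col_mx V1 V2.
  by rewrite mul_block_col !mul0mx addr0 add0r.
by rewrite mulmxK // -row_full_unit.
Qed.

Lemma red_idem k n' (e : 'I_k -> 'M[algC]_n'.+1) (P : 'M[algC]_n'.+1) :
  P *m P = P -> P != 0 -> P != 1%:M -> (forall j, P *m e j = e j *m P) ->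
  reducible e.
Proof.
move=> PP P0 P1 Pe.
set Q := 1%:M - P.
have QP : Q *m P = 0 by rewrite mulmxBl mul1mx PP subrr.
have s2 : (kermx P <= Q)%MS.
  have <- : kermx P *m Q = kermx P by rewrite mulmxBr mulmx_ker mulmx1 subr0.
  exact: submxMl.
have s1 : (Q <= kermx P)%MS by rewrite sub_kermx QP.
have rQ : \rank Q = (n'.+1 - \rank P)%N.
  by rewrite -mxrank_ker; apply/eqP; rewrite eqn_leq !mxrankS.
have rPn : (\rank P <= n'.+1)%N by apply: rank_leq_row.
have Q0 : Q != 0 by rewrite subr_eq0 eq_sym.
have Hr : (\rank P + \rank Q)%N = n'.+1 by rewrite rQ subnKC.
exists (\rank P), (\rank Q), Hr.
split; first by rewrite lt0n mxrank_eq0.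
split.
  by rewrite -[X in (_ < X)%N]Hr -{1}[\rank P]addn0 ltn_add2l lt0n mxrank_eq0.
apply: (@red_helper k _ _ _ Hr e (row_base P) (row_base Q)).
- rewrite -sub1mx -addsmxE.
  rewrite (adds_eqmx (eq_row_base P) (eq_row_base Q)).
  have -> : (1%:M : 'M[algC]_n'.+1) = P + Q by rewrite addrC subrK.
  exact: addmx_sub_adds.
- move=> i; rewrite (eq_row_base P).
  have hP : (row_base P <= P)%MS by rewrite eq_row_base.
  by apply: submx_trans (submxMr _ hP) _; rewrite Pe submxMl.
- move=> i; rewrite (eq_row_base Q).
  have hQ : (row_base Q <= Q)%MS by rewrite eq_row_base.
  apply: submx_trans (submxMr _ hQ) _.
  by rewrite /Q mulmxBl Pe mul1mx -{1}(mulmx1 (e i)) -mulmxBr submxMl.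
Qed.

Lemma eig_nunit n (M : 'M[algC]_n) c : eigenvalue M c -> (M - c%:M) \notin unitmx.
Proof.
by rewrite /eigenvalue /eigenspace -row_free_unit -kermx_eq0.
Qed.

Lemma char_split n (M : 'M[algC]_n) :
  exists r : seq algC, char_poly M = \prod_(z <- r) ('X - z%:P).
Proof.
have [r Hr] := closed_field_poly_normal (char_poly M).
by exists r; rewrite Hr (monicP (char_poly_monic M)) scale1r.
Qed.

Lemma hm_nunit n' (M : 'M[algC]_n'.+1) c q w :
  root q c -> eigenvalue M c -> horner_mx M (w * q) != 1.
Proof.
move=> /factor_theorem [q' ->] Ec; apply/eqP => H.
have H2 : horner_mx M (w * q') * (M - c%:M) = 1.
  by rewrite -H mulrA [RHS]rmorphM /= rmorphB /= horner_mx_X horner_mx_C.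
have [_ U] := mulmx1_unit H2.
by move: (@eig_nunit _ M c Ec); rewrite U.
Qed.

Lemma two_eig k n' (e : 'I_k -> 'M[algC]_n'.+1) (M : 'M[algC]_n'.+1) a b :
  (forall j, M *m e j = e j *m M) -> eigenvalue M a -> eigenvalue M b -> a != b ->
  reducible e.
Proof.
move=> Me Ea Eb ab.
have [r Hr] := char_split _ M.
have inr c : eigenvalue M c -> c \in r.
  by rewrite eigenvalue_root_char Hr root_prod_XsubC.
pose f := \prod_(z <- r | z == a) ('X - z%:P).
pose g := \prod_(z <- r | z != a) ('X - z%:P).
have pfg : char_poly M = f * g by rewrite Hr (bigID (fun z => z == a)).
have cfg : coprimep f g.
  apply: Pdiv.ClosedField.root_coprimep => x.
  rewrite /f -big_filter root_prod_XsubC mem_filter.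
  case/andP => /eqP -> _.
  have : ~~ root g a.
    rewrite /g -big_filter root_prod_XsubC mem_filter eqxx //.
  by [].
have [[u v] /= Huv] := Bezout_eq1_coprimepP _ _ cfg.
pose P := horner_mx M (v * g).
have P1 : 1 - P = horner_mx M (u * f).
  have -> : u * f = 1 - v * g by rewrite -Huv addrK.
  by rewrite rmorphB /= rmorph1.
have H0 : P * (1 - P) = 0.
  rewrite P1 /P -rmorphM /= mulrACA [g * f]mulrC -pfg rmorphM /=.
  by rewrite Cayley_Hamilton mulr0.
have PP : P *m P = P.
  by move/eqP: H0; rewrite mulrBr mulr1 subr_eq0 => /eqP H; exact: (esym H).
apply: (@red_idem k n' e P PP).
- apply/eqP => P0.
  have rf : root f a by rewrite /f -big_filter root_prod_XsubC mem_filter eqxx inr.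
  by have := hm_nunit n' M a f u rf Ea; rewrite -P1 P0 subr0 eqxx.
- apply/eqP => P0.
  have rg : root g b.
    by rewrite /g -big_filter root_prod_XsubC mem_filter eq_sym ab inr.
  by have := hm_nunit n' M b g v rg Eb; rewrite -/P P0 eqxx.
- by move=> j; apply: comm_horner_mx.
Qed.

Lemma eig_unit n (M : 'M[algC]_n) c : (M - c%:M \in unitmx) = ~~ eigenvalue M c.
Proof.
by rewrite /eigenvalue /eigenspace -row_free_unit -kermx_eq0 negbK.
Qed.

Lemma prod_const (r : seq algC) mu : (forall z, z \in r -> z = mu) ->
  \prod_(z <- r) ('X - z%:P) = ('X - mu%:P) ^+ size r.
Proof.
elim: r => [|z r IH] H; first by rewrite big_nil expr0.
have Hz : z = mu by apply: H; rewrite in_cons eqxx.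
rewrite big_cons exprS IH; first by rewrite Hz.
by move=> y yr; apply: H; rewrite in_cons yr orbT.
Qed.

Lemma one_eig n' (M : 'M[algC]_n'.+1) mu : (forall c, eigenvalue M c -> c = mu) ->
  (M - mu%:M) ^+ n'.+1 = 0.
Proof.
move=> H; have [r Hr] := char_split _ M.
have Hs : size r = n'.+1.
  by have := size_char_poly M; rewrite Hr size_prod_XsubC => -[].
have E : char_poly M = ('X - mu%:P) ^+ n'.+1.
  rewrite Hr -Hs; apply: prod_const => z zr; apply: H.
  by rewrite eigenvalue_root_char Hr root_prod_XsubC.
have := Cayley_Hamilton M; rewrite E rmorphXn /= rmorphB /=.
by rewrite horner_mx_X horner_mx_C.
Qed.

Lemma eig_sq n (A : 'M[algC]_n) a : eigenvalue A a -> eigenvalue (A *m A) (a ^+ 2).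
Proof.
move/eigenvalueP => [v Hv v0]; apply/eigenvalueP; exists v => //.
by rewrite mulmxA Hv -scalemxAl Hv scalerA expr2.
Qed.

Lemma count_sum (r : seq algC) lam : lam != 0 ->
  (forall z, z \in r -> z = lam \/ z = - lam) ->
  (count_mem lam r + count_mem (- lam) r = size r)%N /\
  \sum_(z <- r) z = (count_mem lam r)%:R * lam - (count_mem (- lam) r)%:R * lam.
Proof.
move=> l0; elim: r => [|z r IH] H; first by rewrite big_nil /= mul0r subrr.
have [IH1 IH2] : (count_mem lam r + count_mem (- lam) r = size r)%N /\
  \sum_(z <- r) z = (count_mem lam r)%:R * lam - (count_mem (- lam) r)%:R * lam.
  by apply: IH => y yr; apply: H; rewrite in_cons yr orbT.
have Hne : (lam == - lam) = false.
  by apply/negbTE; rewrite eq_sym eqNr.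
rewrite big_cons /=.
have [->|->] := H z (mem_head z r).
- rewrite eqxx Hne /= add0n; split; first by rewrite -IH1 addSn.
  by rewrite IH2 mulrS mulrDl mul1r addrA.
- rewrite eq_sym Hne eqxx /= add0n; split; first by rewrite -IH1 addnS.
  by rewrite IH2 mulrS mulrDl mul1r opprD addrCA.
Qed.

Lemma part2 N (A : 'M[algC]_N.+1) lam : A \in unitmx -> \tr A = 0 ->
  (forall a, eigenvalue A a -> a = lam \/ a = - lam) ->
  exists m, N.+1 = (m + m)%N /\ mup lam (char_poly A) = m.
Proof.
move=> U T H.
have [r Hr] := char_split _ A.
have Hs : size r = N.+1.
  by have := size_char_poly A; rewrite Hr size_prod_XsubC => -[].
have Er z : z \in r -> z = lam \/ z = - lam.
  by move=> zr; apply: H; rewrite eigenvalue_root_char Hr root_prod_XsubC.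
have l0 : lam != 0.
  case: r Hr Hs Er => [//|z r] Hr _ Er.
  have Ez : eigenvalue A z by rewrite eigenvalue_root_char Hr root_prod_XsubC mem_head.
  have nz : z != 0.
    apply: contraTneq Ez => ->; rewrite -eig_unit.
    have -> : (0 : algC)%:M = 0 :> 'M_N.+1 by apply/matrixP=> a b; rewrite !mxE mul0rn.
    by rewrite subr0.
  apply: contraNneq nz => l0; case: (Er z (mem_head z r)) => ->; by rewrite l0 ?oppr0.
have [C1 C2] := count_sum r lam l0 Er.
have S0 : \sum_(z <- r) z = 0.
  have := char_poly_trace A (ltn0Sn N); rewrite Hr -{1}Hs coefPn_prod_XsubC ?Hs //.
  by rewrite T oppr0 => /eqP; rewrite oppr_eq0 => /eqP.
have Eab : count_mem lam r = count_mem (- lam) r.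
  move: S0; rewrite C2 -mulrBl => /eqP; rewrite mulf_eq0 (negbTE l0) orbF subr_eq0.
  by rewrite eqr_nat => /eqP.
exists (count_mem lam r); split; first by rewrite -Hs -C1 -Eab.
by rewrite Hr mu_prod_XsubC.
Qed.

Lemma z0mx N : (0 : algC)%:M = 0 :> 'M_N.
Proof. by apply/matrixP=> a b; rewrite !mxE mul0rn. Qed.

Theorem proposition4p5 (n k : nat) (e : 'I_k -> 'M[algC]_n) :
  anticommuting e -> irreducible_family e ->
  (forall i : 'I_k, e i \in unitmx \/ nilpotent_mx (e i)) /\
  exists lam : 'I_k -> algC,
    (forall (i : 'I_k) (a : algC),
        eigenvalue (e i) a -> a = lam i \/ a = - lam i) /\
    ((exists i j : 'I_k, i != j /\ e i \in unitmx /\ e j \in unitmx) ->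
       ~~ odd n /\
       forall i : 'I_k, e i \in unitmx ->
         mup (lam i) (char_poly (e i)) = n./2).
Proof.
move=> Hac Hirr.
case: n e Hac Hirr => [|n'] e Hac Hirr.
  split; first by move=> i; left; rewrite unitmxE det_mx00 unitr1.
  exists (fun _ => 0); split.
    by move=> i a; rewrite /eigenvalue /eigenspace flatmx0 eqxx.
  move=> _; split => // i _.
  have [r Hr] := char_split _ (e i).
  have := size_char_poly (e i); rewrite Hr size_prod_XsubC.
  by case: r Hr => // Hr _; rewrite mu_prod_XsubC.
have Me i j : (e i *m e i) *m e j = e j *m (e i *m e i).
  case: (eqVneq i j) => [->|ij]; first by rewrite !mulmxA.
  have h : e i *m e j = - (e j *m e i) by apply: Hac.
  by rewrite -mulmxA h mulmxN [in LHS]mulmxA h mulNmx opprK -mulmxA.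
have Hone i : exists mu, forall c, eigenvalue (e i *m e i) c -> c = mu.
  have [r Hr] := char_split _ (e i *m e i).
  exists (head 0 r) => c Ec.
  have cr : c \in r by rewrite -root_prod_XsubC -Hr -eigenvalue_root_char.
  have hr : head 0 r \in r by case: r Hr cr => //= ? ? _ _; rewrite mem_head.
  have Eh : eigenvalue (e i *m e i) (head 0 r).
    by rewrite eigenvalue_root_char Hr root_prod_XsubC.
  apply/eqP; apply: contraT => ne; exfalso; apply: Hirr.
  exact: (two_eig k n' e _ c (head 0 r) (Me i) Ec Eh ne).
have [mu Hmu] := fin_all_exists Hone.
have Hpow i : (e i *m e i - (mu i)%:M) ^+ n'.+1 = 0 := one_eig n' _ _ (Hmu i).
have Hlam i a : eigenvalue (e i) a -> a = sqrtC (mu i) \/ a = - sqrtC (mu i).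
  move/eig_sq/Hmu => Ha.
  have : a ^+ 2 == sqrtC (mu i) ^+ 2 by rewrite sqrtCK Ha.
  by rewrite eqf_sqr => /orP [/eqP -> | /eqP ->]; [left | right].
split.
  move=> i; case: (eqVneq (mu i) 0) => [m0|m0].
    right; exists (2 * n'.+1)%N; rewrite exprM expr2.
    by have := Hpow i; rewrite m0 z0mx subr0.
  left.
  have U : e i *m e i \in unitmx.
    rewrite -[e i *m e i]subr0 -(z0mx n'.+1) eig_unit.
    by apply/negP => /Hmu H0; move: m0; rewrite -H0 eqxx.
  by move: U; rewrite unitmx_mul => /andP [].
exists (fun i => sqrtC (mu i)); split; first exact: Hlam.
move=> [i0 [j0 [ij0 [U0 V0]]]].
have Htr i j : i != j -> e j \in unitmx -> \tr (e i) = 0.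
  move=> ij Uj.
  have E : e j *m e i *m invmx (e j) = - e i.
    by rewrite (Hac j i); [rewrite mulNmx mulmxK | rewrite eq_sym].
  have : \tr (e i) = - \tr (e i).
    rewrite -raddfN /= -E -mulmxA mxtrace_mulC mulmxKV //.
  by move/eqP; rewrite eq_sym eqNr => /eqP.
have Hp i : e i \in unitmx -> exists m, n'.+1 = (m + m)%N /\
    mup (sqrtC (mu i)) (char_poly (e i)) = m.
  move=> Ui; apply: part2 => //; last exact: Hlam.
  case: (eqVneq i i0) => [->|ii0]; first exact: (Htr i0 j0 ij0 V0).
  exact: (Htr i i0 ii0 U0).
split.
  by have [m [Hm _]] := Hp i0 U0; rewrite Hm addnn odd_double.
move=> i Ui; have [m [Hm Hm2]] := Hp i Ui.
by rewrite Hm2 Hm addnn doubleK.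
Qed.
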